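(* Let $X$ be a real Hilbert space, $I$ a finite index set, and $(T_i)_{i\in I}$ averaged nonexpansive, boundedly regular operators $X\to X$ with $Z_i=\operatorname{Fix}T_i$ and $Z=\bigcap_{i\in I}Z_i\neq\varnothing$. Suppose $(Z_i)_{i\in I}$ is innately boundedly regular. Let $x_0\in X$, let $r\colon\mathbb N\to I$ be a random map for $I$, and define $x_{n+1}=T_{r(n)}x_n$. Then $(x_n)_{n\in\mathbb N}$ converges strongly to some point $\bar z\in Z$. If moreover $Z$ is an affine subspace, then $\bar z=P_Zx_0$.
   Context: $T$ is averaged nonexpansive if $T=(1-\lambda)\mathrm{Id}+\lambda N$ with $\lambda\in[0,1[$ and $N$ nonexpansive. $T$ with $\operatorname{Fix}T\ne\varnothing$ is boundedly regular if every bounded sequence $(x_n)$ with $x_n-Tx_n\to0$ satisfies $d_{\operatorname{Fix}T}(x_n)\to0$. A finite family $(C_i)_{i\in I}$ of closed convex sets with $C=\bigcap_iC_i\ne\varnothing$ is boundedly regular if for every bounded sequence $(x_n)$, $\max_{i}d_{C_i}(x_n)\to0$ implies $d_C(x_n)\to0$; it is innately boundedly regular if $(C_j)_{j\in J}$ is boundedly regular for every nonempty $J\subseteq I$. A map $r\colon\mathbb N\to I$ is a random map for $I$ if $r^{-1}(i)$ is infinite for every $i\in I$. $P_Z$ is the metric projection onto $Z$. *)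

(* Defs.v *)
From Stdlib Require Import Reals Lra List Classical ClassicalEpsilon.
Open Scope R_scope.

Definition cauchy_wrt {T : Type} (d : T -> T -> R) (u : nat -> T) : Prop :=
  forall eps, 0 < eps -> exists N, forall m n, (N <= m)%nat -> (N <= n)%nat -> d (u m) (u n) < eps.
Definition conv_wrt {T : Type} (d : T -> T -> R) (u : nat -> T) (l : T) : Prop :=
  forall eps, 0 < eps -> exists N, forall n, (N <= n)%nat -> d (u n) l < eps.

Record RHilbert := {
  hcar :> Type;
  hzero : hcar;
  hadd : hcar -> hcar -> hcar;
  hopp : hcar -> hcar;
  hscal : R -> hcar -> hcar;
  hinner : hcar -> hcar -> R;
  hadd_assoc : forall x y z, hadd x (hadd y z) = hadd (hadd x y) z;
  hadd_comm : forall x y, hadd x y = hadd y x;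
  hadd_0 : forall x, hadd x hzero = x;
  hadd_opp : forall x, hadd x (hopp x) = hzero;
  hscal_assoc : forall a b x, hscal a (hscal b x) = hscal (a * b) x;
  hscal_1 : forall x, hscal 1 x = x;
  hscal_distr_v : forall a x y, hscal a (hadd x y) = hadd (hscal a x) (hscal a y);
  hscal_distr_s : forall a b x, hscal (a + b) x = hadd (hscal a x) (hscal b x);
  hinner_sym : forall x y, hinner x y = hinner y x;
  hinner_add_l : forall x y z, hinner (hadd x y) z = hinner x z + hinner y z;
  hinner_scal_l : forall a x y, hinner (hscal a x) y = a * hinner x y;
  hinner_pos : forall x, 0 <= hinner x x;
  hinner_def : forall x, hinner x x = 0 -> x = hzero;
  hcomplete : forall u : nat -> hcar,
    cauchy_wrt (fun x y => sqrt (hinner (hadd x (hopp y)) (hadd x (hopp y)))) u ->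
    exists l, conv_wrt (fun x y => sqrt (hinner (hadd x (hopp y)) (hadd x (hopp y)))) u l
}.

Arguments hzero {_}. Arguments hadd {_}. Arguments hopp {_}.
Arguments hscal {_}. Arguments hinner {_}.

Section Ops.
Context {X : RHilbert}.

Definition hsub (x y : X) : X := hadd x (hopp y).
Definition hnorm (x : X) : R := sqrt (hinner x x).

Definition converges_to (u : nat -> X) (l : X) : Prop :=
  forall eps, 0 < eps -> exists N, forall n, (N <= n)%nat -> hnorm (hsub (u n) l) < eps.

Definition bounded_seq (u : nat -> X) : Prop := exists M, forall n, hnorm (u n) <= M.

Definition nonexpansive (N : X -> X) : Prop :=
  forall x y, hnorm (hsub (N x) (N y)) <= hnorm (hsub x y).

Definition averaged_nonexpansive (T : X -> X) : Prop :=
  exists (lam : R) (N : X -> X), 0 <= lam < 1 /\ nonexpansive N /\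
    forall x, T x = hadd (hscal (1 - lam) x) (hscal lam (N x)).

Definition Fix (T : X -> X) : X -> Prop := fun x => T x = x.

Definition is_inf (E : R -> Prop) (m : R) : Prop :=
  (forall y, E y -> m <= y) /\ (forall b, (forall y, E y -> b <= y) -> b <= m).

(* d_C(x) = inf { ||x - c|| : c ∈ C } (chosen by Hilbert's epsilon; it exists whenever C is nonempty) *)
Definition dist (C : X -> Prop) (x : X) : R :=
  epsilon (inhabits 0) (fun m => is_inf (fun y => exists c, C c /\ y = hnorm (hsub x c)) m).

Definition boundedly_regular_op (T : X -> X) : Prop :=
  (exists z, Fix T z) /\
  forall u : nat -> X, bounded_seq u ->
    Un_cv (fun n => hnorm (hsub (u n) (T (u n)))) 0 ->
    Un_cv (fun n => dist (Fix T) (u n)) 0.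

(* Finite index set I, enumerated by [enum]. A subfamily is given by J : I -> bool. *)
Definition inter_fam {I : Type} (C : I -> X -> Prop) (J : I -> bool) : X -> Prop :=
  fun x => forall i, J i = true -> C i x.

Definition max_dist {I : Type} (enum : list I) (C : I -> X -> Prop) (J : I -> bool) (x : X) : R :=
  fold_right Rmax 0 (map (fun i => dist (C i) x) (filter J enum)).

Definition boundedly_regular_fam {I : Type} (enum : list I) (C : I -> X -> Prop) (J : I -> bool) : Prop :=
  forall u : nat -> X, bounded_seq u ->
    Un_cv (fun n => max_dist enum C J (u n)) 0 ->
    Un_cv (fun n => dist (inter_fam C J) (u n)) 0.

Definition innately_boundedly_regular {I : Type} (enum : list I) (C : I -> X -> Prop) : Prop :=
  forall J : I -> bool, (exists i, J i = true) -> boundedly_regular_fam enum C J.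

Definition affine_subspace (Z : X -> Prop) : Prop :=
  (exists z, Z z) /\
  forall x y t, Z x -> Z y -> Z (hadd (hscal (1 - t) x) (hscal t y)).

Definition is_proj (Z : X -> Prop) (x p : X) : Prop :=
  Z p /\ forall z, Z z -> hnorm (hsub x p) <= hnorm (hsub x z).

End Ops.

Definition random_map {I : Type} (r : nat -> I) : Prop :=
  forall i N, exists n, (N <= n)%nat /\ r n = i.

Fixpoint iterates {X : Type} {I : Type} (T : I -> X -> X) (r : nat -> I) (x0 : X) (n : nat) : X :=
  match n with
  | O => x0
  | S k => T (r k) (iterates T r x0 k)
  end.

(* Main.v *)
Require Import Defs.
From Stdlib Require Import Reals Lra Lia List Classical ClassicalEpsilon.
Open Scope R_scope.


Notation hdist := Defs.dist.

Lemma inner_zero_l {X : RHilbert} (y : X) : hinner hzero y = 0.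
Proof.
  assert (H := hinner_add_l X hzero hzero y). rewrite hadd_0 in H. lra.
Qed.

Lemma inner_opp_l {X : RHilbert} (x y : X) : hinner (hopp x) y = - hinner x y.
Proof.
  assert (H := hinner_add_l X x (hopp x) y). rewrite hadd_opp, inner_zero_l in H. lra.
Qed.

Lemma inner_sub_l {X : RHilbert} (x z y : X) : hinner (hsub x z) y = hinner x y - hinner z y.
Proof. unfold hsub. rewrite hinner_add_l, inner_opp_l. ring. Qed.

Lemma inner_add_r {X : RHilbert} (x y z : X) : hinner x (hadd y z) = hinner x y + hinner x z.
Proof. rewrite !(hinner_sym X x), hinner_add_l. ring. Qed.
Lemma inner_scal_r {X : RHilbert} a (x y : X) : hinner x (hscal a y) = a * hinner x y.
Proof. rewrite !(hinner_sym X x), hinner_scal_l. ring. Qed.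
Lemma inner_sub_r {X : RHilbert} (x y z : X) : hinner x (hsub y z) = hinner x y - hinner x z.
Proof. rewrite !(hinner_sym X x), inner_sub_l. ring. Qed.
Lemma inner_zero_r {X : RHilbert} (y : X) : hinner y hzero = 0.
Proof. rewrite hinner_sym. apply inner_zero_l. Qed.

Lemma inner_opp_r {X : RHilbert} (x y : X) : hinner x (hopp y) = - hinner x y.
Proof. rewrite !(hinner_sym X x). apply inner_opp_l. Qed.

Lemma sub_zero_eq {X : RHilbert} (u v : X) : hsub u v = hzero -> u = v.
Proof.
  unfold hsub. intro H.
  assert (E: hadd (hadd u (hopp v)) v = v) by (rewrite H, hadd_comm, hadd_0; auto).
  rewrite <- hadd_assoc, (hadd_comm X (hopp v)), hadd_opp, hadd_0 in E. exact E.
Qed.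

Lemma vec_ext {X : RHilbert} (u v : X) : (forall w, hinner u w = hinner v w) -> u = v.
Proof.
  intro H. apply sub_zero_eq. apply hinner_def. rewrite inner_sub_l, H. ring.
Qed.

Ltac lexp := repeat (rewrite ?hinner_add_l, ?hinner_scal_l, ?inner_opp_l, ?inner_sub_l, ?inner_zero_l).
Ltac rexp := repeat (rewrite ?inner_add_r, ?inner_scal_r, ?inner_sub_r, ?inner_zero_r, ?inner_opp_r).

Definition nsq {X : RHilbert} (x : X) := hinner x x.

Lemma nsq_pos {X : RHilbert} (x : X) : 0 <= nsq x.
Proof. apply hinner_pos. Qed.

Lemma hnorm_pos {X : RHilbert} (x : X) : 0 <= hnorm x.
Proof. apply sqrt_pos. Qed.

Lemma hnorm_sq {X : RHilbert} (x : X) : hnorm x * hnorm x = nsq x.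
Proof. apply sqrt_sqrt, nsq_pos. Qed.

Lemma nsq_add {X : RHilbert} (a b : X) : nsq (hadd a b) = nsq a + 2 * hinner a b + nsq b.
Proof. unfold nsq. lexp; rexp. rewrite (hinner_sym X b a). ring. Qed.
Lemma nsq_sub {X : RHilbert} (a b : X) : nsq (hsub a b) = nsq a - 2 * hinner a b + nsq b.
Proof. unfold nsq. lexp; rexp. rewrite (hinner_sym X b a). ring. Qed.
Lemma nsq_scal {X : RHilbert} k (a : X) : nsq (hscal k a) = k * k * nsq a.
Proof. unfold nsq. lexp; rexp. ring. Qed.

Lemma hnorm_le_nsq {X : RHilbert} (a b : X) : nsq a <= nsq b -> hnorm a <= hnorm b.
Proof. intro; apply sqrt_le_1_alt; auto. Qed.
Lemma nsq_le_hnorm {X : RHilbert} (a b : X) : hnorm a <= hnorm b -> nsq a <= nsq b.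
Proof. intro H. rewrite <- !hnorm_sq. assert (H0:=hnorm_pos a). nra. Qed.

Lemma nsq_zero {X : RHilbert} (y : X) : nsq y = 0 -> y = hzero.
Proof. apply hinner_def. Qed.

Lemma CS {X : RHilbert} (x y : X) : hinner x y * hinner x y <= nsq x * nsq y.
Proof.
  destruct (Req_dec (nsq y) 0) as [H|H].
  - apply nsq_zero in H. subst y. unfold nsq. rewrite !inner_zero_r. lra.
  - assert (Hy := nsq_pos y). assert (Hp : 0 < nsq y) by lra.
    set (t := - hinner x y / nsq y).
    assert (H0 := nsq_pos (hadd x (hscal t y))). rewrite nsq_add, nsq_scal in H0.
    rewrite inner_scal_r in H0. unfold t in H0.
    assert (E: nsq x + 2 * (- hinner x y / nsq y * hinner x y) +
       - hinner x y / nsq y * (- hinner x y / nsq y) * nsq y = (nsq x * nsq y - hinner x y * hinner x y) / nsq y) by (field; auto).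
    rewrite E in H0.
    assert (H1: 0 <= (nsq x * nsq y - hinner x y * hinner x y) / nsq y * nsq y) by (apply Rmult_le_pos; lra).
    replace ((nsq x * nsq y - hinner x y * hinner x y) / nsq y * nsq y) with (nsq x * nsq y - hinner x y * hinner x y) in H1 by (field; auto).
    lra.
Qed.

Lemma inner_le {X : RHilbert} (x y : X) : hinner x y <= hnorm x * hnorm y.
Proof.
  assert (H := CS x y). assert (Hx := hnorm_pos x). assert (Hy := hnorm_pos y).
  rewrite <- (hnorm_sq x), <- (hnorm_sq y) in H.
  assert (Hp : 0 <= hnorm x * hnorm y) by (apply Rmult_le_pos; auto).
  replace (hnorm x * hnorm x * (hnorm y * hnorm y)) with ((hnorm x * hnorm y) * (hnorm x * hnorm y)) in H by ring.
  destruct (Rle_lt_dec (hinner x y) (hnorm x * hnorm y)); auto.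
  assert ((hnorm x * hnorm y) * (hnorm x * hnorm y) < hinner x y * hinner x y) by (apply Rmult_le_0_lt_compat; lra).
  lra.
Qed.


Lemma abs_inner_le {X : RHilbert} (x y : X) : Rabs (hinner x y) <= hnorm x * hnorm y.
Proof.
  unfold Rabs; destruct Rcase_abs. 
  - assert (H := inner_le (hopp x) y). rewrite inner_opp_l in H.
    assert (E: hnorm (hopp x) = hnorm x). { unfold hnorm. f_equal. rewrite inner_opp_l, inner_opp_r. ring. }
    rewrite E in H. lra.
  - apply inner_le.
Qed.

Lemma tri {X : RHilbert} (a b : X) : hnorm (hadd a b) <= hnorm a + hnorm b.
Proof.
  apply (Rle_trans _ (sqrt ((hnorm a + hnorm b) * (hnorm a + hnorm b)))).
  - unfold hnorm at 1. apply sqrt_le_1_alt. change (nsq (hadd a b) <= (hnorm a + hnorm b) * (hnorm a + hnorm b)). rewrite nsq_add.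
    assert (H := inner_le a b). rewrite <- (hnorm_sq a), <- (hnorm_sq b). unfold nsq in *. nra.
  - rewrite sqrt_square. lra. assert (H1 := hnorm_pos a); assert (H2 := hnorm_pos b). lra.
Qed.

Lemma hnorm_scal {X : RHilbert} k (a : X) : hnorm (hscal k a) = Rabs k * hnorm a.
Proof.
  unfold hnorm. fold (nsq (hscal k a)). rewrite nsq_scal. rewrite sqrt_mult_alt.
  - f_equal. rewrite <- sqrt_Rsqr_abs. reflexivity.
  - nra.
Qed.

Lemma sub_split {X : RHilbert} (x y z : X) : hsub x z = hadd (hsub x y) (hsub y z).
Proof. apply vec_ext; intro w. lexp. ring. Qed.

Lemma tri_sub {X : RHilbert} (x y z : X) : hnorm (hsub x z) <= hnorm (hsub x y) + hnorm (hsub y z).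
Proof. rewrite (sub_split x y z). apply tri. Qed.

Lemma hnorm_sub_sym {X : RHilbert} (x y : X) : hnorm (hsub x y) = hnorm (hsub y x).
Proof. unfold hnorm. f_equal. fold (nsq (hsub x y)). fold (nsq (hsub y x)). rewrite !nsq_sub. rewrite (hinner_sym X y x). ring. Qed.

Lemma hnorm_sub_le {X : RHilbert} (x y : X) : hnorm x <= hnorm (hsub x y) + hnorm y.
Proof.
  assert (E: x = hadd (hsub x y) y) by (apply vec_ext; intro w; lexp; ring).
  rewrite E at 1. apply tri.
Qed.

Lemma hnorm_zero_eq {X : RHilbert} (x y : X) : hnorm (hsub x y) = 0 -> x = y.
Proof.
  intro H. apply sub_zero_eq, nsq_zero. rewrite <- hnorm_sq, H. ring.
Qed.

Lemma inf_exists (E : R -> Prop) : (exists y, E y) -> (forall y, E y -> 0 <= y) -> exists m, is_inf E m.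
Proof.
  intros [y0 Hy0] Hlb.
  destruct (completeness (fun t => E (- t))) as [m [H1 H2]].
  - exists 0. intros t Ht. apply Hlb in Ht. lra.
  - exists (- y0). rewrite Ropp_involutive. auto.
  - exists (- m). split.
    + intros y Hy. assert (H : E (- - y) -> - y <= m) by apply H1. rewrite Ropp_involutive in H. specialize (H Hy). lra.
    + intros b Hb. assert (H := H2 (- b)). assert (- b >= m).
      { apply Rle_ge, H. intros t Ht. apply Hb in Ht. lra. } lra.
Qed.

Definition dset {X : RHilbert} (C : X -> Prop) (x : X) := fun y => exists c, C c /\ y = hnorm (hsub x c).

Lemma dist_spec {X : RHilbert} (C : X -> Prop) (x : X) : (exists c, C c) -> is_inf (dset C x) (hdist C x).
Proof.
  intros [c Hc]. unfold Defs.dist. apply epsilon_spec.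
  apply inf_exists. exists (hnorm (hsub x c)). exists c; auto.
  intros y [c' [_ ->]]. apply hnorm_pos.
Qed.

Lemma dist_le {X : RHilbert} (C : X -> Prop) (x c : X) : C c -> hdist C x <= hnorm (hsub x c).
Proof. intro Hc. destruct (dist_spec C x) as [H _]. eauto. apply H. exists c; auto. Qed.

Lemma dist_glb {X : RHilbert} (C : X -> Prop) (x : X) b : (exists c, C c) -> (forall c, C c -> b <= hnorm (hsub x c)) -> b <= hdist C x.
Proof. intros Hne H. destruct (dist_spec C x Hne) as [_ H2]. apply H2. intros y [c [Hc ->]]. auto. Qed.

Lemma dist_pos {X : RHilbert} (C : X -> Prop) (x : X) : (exists c, C c) -> 0 <= hdist C x.
Proof. intro Hne. apply dist_glb; auto. intros; apply hnorm_pos. Qed.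

Lemma dist_approx {X : RHilbert} (C : X -> Prop) (x : X) eps : (exists c, C c) -> 0 < eps ->
  exists c, C c /\ hnorm (hsub x c) < hdist C x + eps.
Proof.
  intros Hne He. apply NNPP. intro Hn.
  assert (hdist C x + eps <= hdist C x); [|lra].
  apply dist_glb; auto. intros c Hc. apply Rnot_lt_le. intro. apply Hn. eauto.
Qed.

Lemma dist_lip {X : RHilbert} (C : X -> Prop) (x y : X) : (exists c, C c) -> hdist C y <= hdist C x + hnorm (hsub x y).
Proof.
  intros Hne. assert (hdist C y - hnorm (hsub x y) <= hdist C x); [|lra].
  apply dist_glb; auto. intros c Hc. assert (H := dist_le C y c Hc).
  assert (H2 := tri_sub y x c). rewrite (hnorm_sub_sym y x) in H2. lra.
Qed.

Lemma dist_mono {X : RHilbert} (C D : X -> Prop) (x : X) : (exists c, C c) -> (forall c, C c -> D c) -> hdist D x <= hdist C x.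
Proof.
  intros [c0 Hc0] Hs. apply dist_glb. exists c0; auto. intros c Hc. apply dist_le. auto.
Qed.

Lemma dist_nonexp {X : RHilbert} (C : X -> Prop) (T : X -> X) (x : X) : (exists c, C c) -> nonexpansive T -> (forall c, C c -> T c = c) ->
  hdist C (T x) <= hdist C x.
Proof.
  intros Hne HT HC. apply dist_glb; auto. intros c Hc.
  eapply Rle_trans. apply (dist_le C (T x) c Hc). rewrite <- (HC c Hc) at 1. apply HT.
Qed.


Lemma avg_nonexp {X : RHilbert} (T : X -> X) : averaged_nonexpansive T -> nonexpansive T.
Proof.
  intros [lam [N [Hl [HN HT]]]] x y.
  assert (E: hsub (T x) (T y) = hadd (hscal (1 - lam) (hsub x y)) (hscal lam (hsub (N x) (N y)))).
  { apply vec_ext; intro w. rewrite !HT. lexp. ring. }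
  rewrite E. eapply Rle_trans. apply tri. rewrite !hnorm_scal.
  rewrite (Rabs_right (1 - lam)) by lra. rewrite (Rabs_right lam) by lra.
  specialize (HN x y). assert (H0 := hnorm_pos (hsub x y)). nra.
Qed.

Lemma avg_fixN {X : RHilbert} (T N : X -> X) lam : 0 < lam ->
  (forall x, T x = hadd (hscal (1 - lam) x) (hscal lam (N x))) -> forall z, T z = z -> N z = z.
Proof.
  intros Hl HT z Hz. apply vec_ext. intro w.
  assert (H: hinner (T z) w = hinner z w) by (rewrite Hz; auto).
  rewrite HT in H.
  rewrite hinner_add_l, !hinner_scal_l in H. apply (Rmult_eq_reg_l lam); [|lra]. lra.
Qed.

Lemma avg_ineq {X : RHilbert} (T : X -> X) : averaged_nonexpansive T ->
  exists c, 0 < c /\ forall x z, T z = z -> c * nsq (hsub x (T x)) <= nsq (hsub x z) - nsq (hsub (T x) z).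
Proof.
  intros [lam [N [Hl [HN HT]]]]. exists (1 - lam). split. lra.
  intros x z Hz.
  destruct (Req_dec lam 0) as [H0|H0].
  - subst lam. assert (E: T x = x) by (apply vec_ext; intro w; rewrite HT; lexp; ring).
    rewrite E. unfold nsq. lexp. lra.
  - assert (HNz := avg_fixN T N lam ltac:(lra) HT z Hz).
    set (a := hsub x z). set (b := hsub (N x) z).
    assert (E1: hsub x (T x) = hscal lam (hsub a b)) by (apply vec_ext; intro w; unfold a, b; rewrite HT; lexp; ring).
    assert (E2: hsub (T x) z = hadd (hscal (1 - lam) a) (hscal lam b)) by (apply vec_ext; intro w; unfold a, b; rewrite HT; lexp; ring).
    rewrite E1, E2, nsq_scal, nsq_add, nsq_sub, !nsq_scal. rewrite hinner_scal_l, inner_scal_r.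
    assert (Hb: nsq b <= nsq a).
    { apply nsq_le_hnorm. unfold a, b. rewrite <- HNz at 1. apply HN. }
    assert (Hd := nsq_pos (hsub a b)). rewrite nsq_sub in Hd.
    set (A := nsq a) in *. set (B := nsq b) in *. set (P := hinner a b) in *.
    assert (0 <= lam * ((1 - lam) * (1 - lam)) * (A - 2 * P + B)) by (apply Rmult_le_pos; [apply Rmult_le_pos; nra|lra]).
    assert (0 <= lam * (A - B)) by (apply Rmult_le_pos; lra).
    nra.
Qed.

Lemma avg_orth {X : RHilbert} (T : X -> X) (z w : X) : averaged_nonexpansive T ->
  (forall t, T (hadd (hscal (1 - t) z) (hscal t w)) = hadd (hscal (1 - t) z) (hscal t w)) ->
  forall x, hinner (T x) (hsub w z) = hinner x (hsub w z).
Proof.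
  intros [lam [N [Hl [HN HT]]]] Hline x.
  rewrite HT. lexp.
  destruct (Req_dec lam 0) as [H0|H0]. { subst lam. ring. }
  assert (HNf : forall t, N (hadd (hscal (1 - t) z) (hscal t w)) = hadd (hscal (1 - t) z) (hscal t w)).
  { intro t. apply (avg_fixN T N lam); auto. lra. }
  set (v := hsub w z).
  set (k := hinner x v - hinner (N x) v).
  assert (Hall: forall t, nsq (hsub (N x) z) - 2 * t * hinner (hsub (N x) z) v <= nsq (hsub x z) - 2 * t * hinner (hsub x z) v).
  { intro t. 
    assert (H := HN x (hadd (hscal (1 - t) z) (hscal t w))). rewrite HNf in H. apply nsq_le_hnorm in H.
    assert (E: forall y : X, hsub y (hadd (hscal (1 - t) z) (hscal t w)) = hsub (hsub y z) (hscal t v)).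
    { intro y. apply vec_ext; intro u. unfold v. lexp. ring. }
    rewrite !E in H. rewrite !nsq_sub, !inner_scal_r, !nsq_scal in H. rewrite !nsq_sub. lra. }
  assert (Hk: k = 0).
  { apply NNPP; intro Hk.
    set (M := nsq (hsub x z) - nsq (hsub (N x) z)).
    specialize (Hall ((Rabs M + 1) / (2 * k))). rewrite !inner_sub_l in Hall. fold v in Hall.
    assert (E: 2 * ((Rabs M + 1) / (2 * k)) * (hinner x v - hinner z v) - 2 * ((Rabs M + 1) / (2 * k)) * (hinner (N x) v - hinner z v) = Rabs M + 1).
    { unfold k in *. field. exact Hk. }
    assert (Rabs M + 1 <= M).
    { revert E Hall. unfold M. generalize ((Rabs (nsq (hsub x z) - nsq (hsub (N x) z)) + 1) / (2 * k)). intros c E Hall. lra. }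
    assert (M <= Rabs M) by apply RRle_abs. lra. }
  unfold k in Hk. nra.
Qed.


Lemma inv_small (eps : R) : 0 < eps -> exists N, forall n, (N <= n)%nat -> / (INR n + 1) < eps.
Proof.
  intro He. destruct (archimed_cor1 eps He) as [N [HN HN0]]. exists N. intros n Hn.
  eapply Rle_lt_trans; [|exact HN]. apply Rinv_le_contravar.
  apply lt_0_INR; lia. apply le_INR in Hn. lra.
Qed.

Lemma unif {X : RHilbert} (f g : X -> R) (z0 : X) (rho : R) :
  (forall y, 0 <= f y) ->
  (forall u : nat -> X, bounded_seq u -> Un_cv (fun n => f (u n)) 0 -> Un_cv (fun n => g (u n)) 0) ->
  forall eps, 0 < eps -> exists delta, 0 < delta /\ forall y, hnorm (hsub y z0) <= rho -> f y < delta -> g y < eps.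
Proof.
  intros Hf H eps He. apply NNPP; intro Hn.
  assert (Hc: forall n : nat, exists y, hnorm (hsub y z0) <= rho /\ f y < / (INR n + 1) /\ eps <= g y).
  { intro n. apply NNPP; intro Hn2. apply Hn. exists (/ (INR n + 1)). split.
    apply Rinv_0_lt_compat. assert (H0 := pos_INR n). lra.
    intros y Hy Hfy. apply Rnot_le_lt. intro Hg. apply Hn2. eauto. }
  set (u := fun n => epsilon (inhabits hzero) (fun y => hnorm (hsub y z0) <= rho /\ f y < / (INR n + 1) /\ eps <= g y)).
  assert (Hu : forall n, hnorm (hsub (u n) z0) <= rho /\ f (u n) < / (INR n + 1) /\ eps <= g (u n)).
  { intro n. unfold u. apply epsilon_spec. apply Hc. }
  assert (Hb : bounded_seq u).
  { exists (rho + hnorm z0). intro n. eapply Rle_trans. apply (hnorm_sub_le (u n) z0). destruct (Hu n) as [H1 _]. lra. }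
  assert (Hcv : Un_cv (fun n => f (u n)) 0).
  { intros e He'. destruct (inv_small e He') as [N HN]. exists N. intros n Hnn. unfold R_dist.
    rewrite Rminus_0_r, Rabs_right by (apply Rle_ge, Hf). destruct (Hu n) as [_ [H2 _]]. specialize (HN n Hnn). lra. }
  destruct (H u Hb Hcv eps He) as [N HN]. specialize (HN N (le_n N)). unfold R_dist in HN.
  rewrite Rminus_0_r in HN. destruct (Hu N) as [_ [_ H3]]. assert (H4 := RRle_abs (g (u N))). lra.
Qed.

Lemma list_min {A : Type} (P : A -> R -> Prop) (l : list A) :
  (forall a d d', 0 < d' <= d -> P a d -> P a d') ->
  (forall a, In a l -> exists d, 0 < d /\ P a d) ->
  exists d, 0 < d /\ forall a, In a l -> P a d.
Proof.
  intros Hm. induction l as [|a l IH]; intro H.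
  - exists 1. split. lra. intros a [].
  - destruct IH as [d1 [Hd1 H1]]. { intros; apply H; right; auto. }
    destruct (H a (or_introl eq_refl)) as [d2 [Hd2 H2]].
    exists (Rmin d1 d2). split. apply Rmin_glb_lt; auto.
    intros b Hb. destruct Hb as [Hb|Hb]; [subst b|].
    + apply (Hm a d2). split. apply Rmin_glb_lt; auto. apply Rmin_r. auto.
    + apply (Hm b d1). split. apply Rmin_glb_lt; auto. apply Rmin_l. auto.
Qed.

Lemma least (Q : nat -> Prop) n : Q n -> exists c, Q c /\ forall k, (k < c)%nat -> ~ Q k.
Proof.
  induction n as [n IH] using (well_founded_induction Wf_nat.lt_wf).
  intro Hn. destruct (classic (exists k, (k < n)%nat /\ Q k)) as [[k [Hk HQ]]|Hno].
  - exact (IH k Hk HQ).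
  - exists n. split; auto. intros k Hk HQ. apply Hno; eauto.
Qed.

Lemma windows {I : Type} (r : nat -> I) (Hr : random_map r) (l : list I) (N : nat) :
  exists b, (N <= b)%nat /\ forall i, In i l -> exists n, (N <= n <= b)%nat /\ r n = i.
Proof.
  induction l as [|a l IH].
  - exists N. split. lia. intros i [].
  - destruct IH as [b [Hb H]]. destruct (Hr a N) as [n [Hn Ha]].
    exists (Nat.max b n). split. lia. intros i [<-|Hi].
    + exists n. split; auto. lia.
    + destruct (H i Hi) as [m [Hm Hmi]]. exists m. split; auto. lia.
Qed.

Lemma fold_max_lt {A : Type} (f : A -> R) (J : A -> bool) (l : list A) d : 0 < d ->
  (forall i, J i = true -> f i < d) -> fold_right Rmax 0 (map f (filter J l)) < d.
Proof.
  intros Hd H. induction l as [|a l IH]; simpl. lra.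
  destruct (J a) eqn:E; simpl; auto. apply Rmax_lub_lt; auto.
Qed.

Lemma fold_max_pos {A : Type} (f : A -> R) (l : list A) : 0 <= fold_right Rmax 0 (map f l).
Proof. induction l; simpl. lra. eapply Rle_trans; [exact IHl| apply Rmax_r]. Qed.

Lemma filter_len_le {A : Type} (f g : A -> bool) (l : list A) :
  (forall k, f k = true -> g k = true) -> (length (filter f l) <= length (filter g l))%nat.
Proof.
  intro H. induction l as [|a l IH]; simpl. lia.
  destruct (f a) eqn:Ef. rewrite (H a Ef). simpl. lia.
  destruct (g a); simpl; lia.
Qed.

Lemma filter_len_lt {A : Type} (f g : A -> bool) (l : list A) j :
  (forall k, f k = true -> g k = true) -> In j l -> g j = true -> f j = false ->
  (length (filter f l) < length (filter g l))%nat.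
Proof.
  intros H Hj Hg Hf. induction l as [|a l IH]; simpl. destruct Hj.
  destruct Hj as [<-|Hj].
  - rewrite Hf, Hg. simpl. assert (H2 := filter_len_le f g l H). lia.
  - specialize (IH Hj). destruct (f a) eqn:Ef. rewrite (H a Ef). simpl. lia.
    destruct (g a); simpl; lia.
Qed.

Definition ceq {I : Type} (k j : I) : bool := if excluded_middle_informative (k = j) then true else false.
Lemma ceq_true {I : Type} (k j : I) : ceq k j = true <-> k = j.
Proof. unfold ceq. destruct excluded_middle_informative; split; congruence. Qed.
Lemma ceq_eq {I : Type} (k j : I) : ceq k j = true -> k = j.
Proof. apply ceq_true. Qed.
Lemma ceq_refl {I : Type} (k : I) : ceq k k = true.
Proof. apply ceq_true; auto. Qed.


Lemma keyK (X : RHilbert) (I : Type) (enum : list I) (Henum : forall i : I, In i enum)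
  (T : I -> X -> X) (HTne : forall i, nonexpansive (T i))
  (r : nat -> I) (x : nat -> X) (hx : forall n, x (S n) = T (r n) (x n))
  (Z : X -> Prop) (HZ : forall z, Z z -> forall i, T i z = z) (HZne : exists z, Z z)
  (z0 : X) (rho : R) (Hball : forall n, hnorm (hsub (x n) z0) <= rho)
  (Hop : forall i eps, 0 < eps -> exists d, 0 < d /\ forall y, hnorm (hsub y z0) <= rho ->
      hnorm (hsub y (T i y)) < d -> hdist (Fix (T i)) y < eps)
  (Hfam : forall J, (exists i, J i = true) -> forall eps, 0 < eps -> exists d, 0 < d /\ forall y, hnorm (hsub y z0) <= rho ->
      max_dist enum (fun i => Fix (T i)) J y < d -> hdist (inter_fam (fun i => Fix (T i)) J) y < eps) :
  forall m (J : I -> bool), (length (filter J enum) <= m)%nat ->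
  forall eps, 0 < eps -> exists d, 0 < d /\ forall a b, (a <= b)%nat ->
    (forall n, (a <= n <= b)%nat -> hnorm (hsub (x n) (x (S n))) < d) ->
    (forall n, (a <= n <= b)%nat -> J (r n) = true) ->
    (forall i, J i = true -> exists n, (a <= n <= b)%nat /\ r n = i) ->
    hdist (inter_fam (fun i => Fix (T i)) J) (x (S b)) < eps.
Proof.
  assert (ZJne : forall J, exists c, inter_fam (fun i => Fix (T i)) J c).
  { intro J. destruct HZne as [z Hz]. exists z. intros i _. apply HZ; auto. }
  induction m as [|m IH]; intros J HJ eps He.
  - exists 1. split. lra. intros a b Hab _ Hin _. exfalso.
    assert (H := filter_len_lt (fun _ => false) J enum (r a) ltac:(discriminate) (Henum _) (Hin a ltac:(lia)) eq_refl).
    lia.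
  - destruct (classic (exists i, J i = true)) as [HJne|HJe].
    2:{ exists 1. split. lra. intros a b Hab _ Hin _. exfalso. apply HJe. exists (r a). apply Hin. lia. }
    destruct (Hfam J HJne eps He) as [d1 [Hd1 Hf1]].
    set (e2 := d1 / 2).
    set (J' := fun j k => andb (J k) (negb (ceq k j))).
    set (P := fun j d => d <= e2 /\
      (forall y, hnorm (hsub y z0) <= rho -> hnorm (hsub y (T j y)) < d -> hdist (Fix (T j)) y < e2) /\
      (J j = true -> forall a b, (a <= b)%nat ->
        (forall n, (a <= n <= b)%nat -> hnorm (hsub (x n) (x (S n))) < d) ->
        (forall n, (a <= n <= b)%nat -> J' j (r n) = true) ->
        (forall i, J' j i = true -> exists n, (a <= n <= b)%nat /\ r n = i) ->
        hdist (inter_fam (fun i => Fix (T i)) (J' j)) (x (S b)) < e2)).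
    destruct (list_min P enum) as [d [Hd HP]].
    { intros j dd dd' Hdd [H1 [H2 H3]]. split; [lra|split].
      - intros y Hy Hs. apply H2; auto. lra.
      - intros Hj a b Hab Hs. apply H3; auto. intros n Hn. specialize (Hs n Hn). lra. }
    { intros j _. assert (He2 : 0 < e2) by (unfold e2; lra).
      destruct (Hop j e2 He2) as [d2 [Hd2 H2]].
      destruct (classic (J j = true)) as [Hj|Hj].
      - assert (Hlen : (length (filter (J' j) enum) <= m)%nat).
        { assert (H := filter_len_lt (J' j) J enum j).
          assert (length (filter (J' j) enum) < length (filter J enum))%nat; [|lia].
          apply H; auto. intros k Hk. unfold J' in Hk. apply andb_prop in Hk. tauto.
          unfold J'. rewrite Hj. simpl. assert (ceq j j = true) by (apply ceq_true; auto). rewrite H0. auto. }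
        destruct (IH (J' j) Hlen e2 He2) as [d3 [Hd3 H3]].
        exists (Rmin e2 (Rmin d2 d3)). split. repeat apply Rmin_glb_lt; auto.
        split. apply Rmin_l. split.
        + intros y Hy Hs. apply H2; auto. eapply Rlt_le_trans. exact Hs. eapply Rle_trans; [apply Rmin_r|apply Rmin_l].
        + intros _ a b Hab Hs. apply H3; auto. intros n Hn. eapply Rlt_le_trans. apply Hs; auto. eapply Rle_trans; [apply Rmin_r|apply Rmin_r].
      - exists (Rmin e2 d2). split. apply Rmin_glb_lt; auto. split. apply Rmin_l. split.
        + intros y Hy Hs. apply H2; auto. eapply Rlt_le_trans. exact Hs. apply Rmin_r.
        + intro Hj'. contradiction. }
    exists d. split; auto.
    intros a b Hab Hs Hin Happ.
    set (Q := fun c => (a <= c)%nat /\ forall i, J i = true -> exists n, (a <= n <= c)%nat /\ r n = i).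
    destruct (least Q b (conj Hab Happ)) as [c [[Hac Qc] Hmin]].
    assert (Hcb : (c <= b)%nat).
    { destruct (Compare_dec.le_lt_dec c b); auto. exfalso. apply (Hmin b); auto. split; auto. }
    set (j := r c).
    assert (Hjin : J j = true) by (apply Hin; lia).
    destruct (HP j (Henum j)) as [Hde2 [Hopj Hihj]].
    assert (Hstc : hnorm (hsub (x c) (x (S c))) < d) by (apply Hs; lia).
    assert (Hmax : max_dist enum (fun i => Fix (T i)) J (x (S c)) < d1).
    { unfold max_dist. apply fold_max_lt; auto. intros i Hi.
      destruct (classic (i = j)) as [Eij|Nij].
      - subst i. eapply Rle_lt_trans. apply (dist_lip _ (x c)).
        { destruct HZne as [z Hz]. exists z. apply HZ; auto. }
        assert (hdist (Fix (T j)) (x c) < e2).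
        { apply Hopj; auto. unfold j. rewrite <- hx. auto. }
        unfold e2 in *. lra.
      - assert (HJ'i : J' j i = true).
        { assert (Hf : ceq i j = false) by (destruct (ceq i j) eqn:E; auto; exfalso; apply Nij; apply ceq_true; exact E). unfold J'. rewrite Hi, Hf. reflexivity. }
        destruct (Qc i Hi) as [ni [Hni Hri]].
        assert (Hnic : ni <> c) by (intro; subst ni; apply Nij; rewrite <- Hri; auto).
        assert (Hw : hdist (inter_fam (fun i => Fix (T i)) (J' j)) (x (S (c - 1))) < e2).
        { apply (Hihj Hjin a (c - 1)%nat). lia.
          - intros n Hn. apply Hs. lia.
          - intros n Hn. unfold J'. rewrite Hin by lia. simpl.
            destruct (ceq (r n) j) eqn:E; auto. apply ceq_eq in E. exfalso.
            apply (Hmin (c - 1)%nat). lia. split. lia.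
            intros i' Hi'. destruct (Qc i' Hi') as [n' [Hn' Hr']].
            destruct (Nat.eq_dec n' c) as [->|Hne].
            + exists n. split. lia. rewrite E, <- Hr'. auto.
            + exists n'. split; auto. lia.
          - intros i' Hi'. unfold J' in Hi'. apply andb_prop in Hi'. destruct Hi' as [Hi'1 Hi'2].
            destruct (Qc i' Hi'1) as [n' [Hn' Hr']]. exists n'. split; auto.
            destruct (Nat.eq_dec n' c) as [->|Hne]; [|lia].
            exfalso. fold j in Hr'. subst i'. unfold j in Hi'2. 
            assert (ceq (r c) (r c) = true) by (apply ceq_true; auto). rewrite H in Hi'2. discriminate. }
        replace (S (c - 1)) with c in Hw by lia.
        eapply Rle_lt_trans. apply (dist_lip _ (x c)).
        { destruct HZne as [z Hz]. exists z. apply HZ; auto. }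
        assert (hdist (Fix (T i)) (x c) <= hdist (inter_fam (fun i => Fix (T i)) (J' j)) (x c)).
        { apply dist_mono; auto. }
        unfold e2 in *. lra. }
    assert (Hc1 : hdist (inter_fam (fun i => Fix (T i)) J) (x (S c)) < eps) by (apply Hf1; auto).
    assert (Hmono : forall k, (S c <= k <= S b)%nat -> hdist (inter_fam (fun i => Fix (T i)) J) (x k) < eps).
    { intros k Hk. induction k as [|k IHk]. lia.
      destruct (Nat.eq_dec k c) as [->|Hkc]; auto.
      rewrite hx. eapply Rle_lt_trans. apply dist_nonexp; auto.
      intros z Hz. apply Hz. apply Hin. lia. apply IHk. lia. }
    apply Hmono. lia.
Qed.


Lemma small_zero (a : R) : 0 <= a -> (forall eta, 0 < eta -> a < eta) -> a = 0.
Proof. intros H0 H. destruct (Req_dec a 0); auto. specialize (H a). lra. Qed.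

Theorem theorem7p2 (X : RHilbert) (I : Type) (enum : list I)
  (Henum : forall i : I, In i enum)
  (T : I -> X -> X)
  (HTavg : forall i, averaged_nonexpansive (T i))
  (HTreg : forall i, boundedly_regular_op (T i))
  (HZne : exists z, inter_fam (fun i => Fix (T i)) (fun _ => true) z)
  (HZreg : innately_boundedly_regular enum (fun i => Fix (T i)))
  (x0 : X) (r : nat -> I) (Hr : random_map r) :
  exists zbar : X,
    inter_fam (fun i => Fix (T i)) (fun _ => true) zbar /\
    converges_to (iterates T r x0) zbar /\
    (affine_subspace (inter_fam (fun i => Fix (T i)) (fun _ => true)) ->
       is_proj (inter_fam (fun i => Fix (T i)) (fun _ => true)) x0 zbar).
Proof.
  set (Z := inter_fam (fun i => Fix (T i)) (fun _ => true)).
  set (x := iterates T r x0).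
  assert (hx : forall n, x (S n) = T (r n) (x n)) by reflexivity.
  assert (HTne : forall i, nonexpansive (T i)) by (intro; apply avg_nonexp; auto).
  assert (HZ : forall z, Z z -> forall i, T i z = z) by (intros z Hz i; apply Hz; reflexivity).
  assert (Hfej : forall n z, Z z -> hnorm (hsub (x (S n)) z) <= hnorm (hsub (x n) z)).
  { intros n z Hz. rewrite hx. assert (H := HTne (r n) (x n) z). rewrite (HZ z Hz) in H. exact H. }
  assert (Hfejk : forall n k z, Z z -> hnorm (hsub (x (n + k)%nat) z) <= hnorm (hsub (x n) z)).
  { intros n k z Hz. induction k. rewrite Nat.add_0_r. lra.
    rewrite Nat.add_succ_r. eapply Rle_trans. apply Hfej; auto. auto. }
  assert (Hfejle : forall n m z, (n <= m)%nat -> Z z -> hnorm (hsub (x m) z) <= hnorm (hsub (x n) z)).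
  { intros n m z Hnm Hz. replace m with (n + (m - n))%nat by lia. auto. }
  destruct HZne as [z0 Hz0].
  set (rho := hnorm (hsub x0 z0)).
  assert (Hball : forall n, hnorm (hsub (x n) z0) <= rho).
  { intro n. apply (Hfejle 0%nat n z0); auto. lia. }
  assert (HZne : exists z, Z z) by eauto.
  assert (Hop : forall i eps, 0 < eps -> exists d, 0 < d /\ forall y, hnorm (hsub y z0) <= rho ->
      hnorm (hsub y (T i y)) < d -> hdist (Fix (T i)) y < eps).
  { intros i. apply (unif (fun y => hnorm (hsub y (T i y))) (hdist (Fix (T i)))).
    intro; apply hnorm_pos. apply (HTreg i). }
  assert (Hfam : forall J, (exists i, J i = true) -> forall eps, 0 < eps -> exists d, 0 < d /\ forall y, hnorm (hsub y z0) <= rho ->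
      max_dist enum (fun i => Fix (T i)) J y < d -> hdist (inter_fam (fun i => Fix (T i)) J) y < eps).
  { intros J HJ. apply (unif (max_dist enum (fun i => Fix (T i)) J) (hdist (inter_fam (fun i => Fix (T i)) J))).
    intro; apply fold_max_pos. apply (HZreg J HJ). }
  destruct (list_min (fun i c => forall y z, T i z = z -> c * nsq (hsub y (T i y)) <= nsq (hsub y z) - nsq (hsub (T i y) z)) enum)
    as [c [Hc Hcs]].
  { intros a dd dd' Hdd H y z Hz. specialize (H y z Hz). assert (H0 := nsq_pos (hsub y (T a y))). nra. }
  { intros i _. destruct (avg_ineq (T i) (HTavg i)) as [c [Hc H]]. eauto. }
  set (f := fun n => nsq (hsub (x n) z0)).
  destruct (inf_exists (fun y => exists n, y = f n)) as [L [HL1 HL2]].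
  { exists (f 0%nat). eauto. } { intros y [n ->]. apply nsq_pos. }
  assert (Hfle : forall n m, (n <= m)%nat -> f m <= f n).
  { intros n m Hnm. unfold f. apply nsq_le_hnorm. auto. }
  assert (Hsteps : forall d, 0 < d -> exists N, forall n, (N <= n)%nat -> hnorm (hsub (x n) (x (S n))) < d).
  { intros d Hd. assert (Heta : 0 < c * (d * d)) by (apply Rmult_lt_0_compat; nra).
    destruct (classic (exists N, f N < L + c * (d * d))) as [[N HN]|Hno].
    2:{ exfalso. assert (L + c * (d * d) <= L); [|lra]. apply HL2. intros y [n ->].
        apply Rnot_lt_le. intro. apply Hno. eauto. }
    exists N. intros n Hn.
    assert (H1 := Hcs (r n) (Henum _) (x n) z0 (HZ z0 Hz0 (r n))).
    rewrite <- hx in H1. fold (f n) in H1. fold (f (S n)) in H1.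
    assert (H2 := Hfle N n Hn). assert (H3 : L <= f (S n)) by (apply HL1; eauto).
    assert (H4 : c * nsq (hsub (x n) (x (S n))) < c * (d * d)) by lra.
    apply Rmult_lt_reg_l in H4; auto. rewrite <- hnorm_sq in H4.
    assert (H5 := hnorm_pos (hsub (x n) (x (S n)))). nra. }
  assert (Hdz : forall eps, 0 < eps -> exists N, forall n, (N <= n)%nat -> hdist Z (x n) < eps).
  { intros eps He.
    destruct (keyK X I enum Henum T HTne r x hx Z HZ HZne z0 rho Hball Hop Hfam
       (length (filter (fun _ => true) enum)) (fun _ => true) (le_n _) eps He) as [d [Hd HK]].
    destruct (Hsteps d Hd) as [N HN].
    destruct (windows r Hr enum N) as [b [Hb Hw]].
    assert (Hb1 : hdist Z (x (S b)) < eps).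
    { apply (HK N b Hb). intros n Hn; apply HN; lia. auto. intros i _. apply Hw, Henum. }
    exists (S b). intros n Hn. induction n. lia.
    destruct (Nat.eq_dec n b) as [->|Hnb]; auto.
    rewrite hx. eapply Rle_lt_trans. apply dist_nonexp; auto.
    apply IHn. lia. }
  assert (Hcau : cauchy_wrt (fun a b => sqrt (hinner (hadd a (hopp b)) (hadd a (hopp b)))) x).
  { intros eps He. destruct (Hdz (eps / 4)) as [N HN]. lra.
    destruct (dist_approx Z (x N) (eps / 4) HZne) as [z [Hz Hzn]]. lra.
    specialize (HN N (le_n N)). exists N. intros m n Hm Hn.
    change (hnorm (hsub (x m) (x n)) < eps).
    eapply Rle_lt_trans. apply (tri_sub _ z). rewrite (hnorm_sub_sym z).
    assert (H1 := Hfejle N m z Hm Hz). assert (H2 := Hfejle N n z Hn Hz). lra. }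
  destruct (hcomplete X x Hcau) as [l Hl].
  change (converges_to x l) in Hl.
  assert (HlZ : Z l).
  { intros i _. unfold Fix. apply hnorm_zero_eq. apply small_zero. apply hnorm_pos.
    intros eta Heta.
    destruct (Hl (eta / 8)) as [N1 HN1]. lra.
    destruct (Hdz (eta / 8)) as [N2 HN2]. lra.
    set (n := Nat.max N1 N2).
    specialize (HN1 n ltac:(lia)). specialize (HN2 n ltac:(lia)).
    destruct (dist_approx Z (x n) (eta / 8) HZne) as [z [Hz Hzn]]. lra.
    assert (Hzl : hnorm (hsub z l) < 3 * eta / 8).
    { eapply Rle_lt_trans. apply (tri_sub _ (x n)). rewrite hnorm_sub_sym. lra. }
    eapply Rle_lt_trans. apply (tri_sub _ z). rewrite <- (HZ z Hz i) at 1.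
    assert (H := HTne i l z). rewrite (hnorm_sub_sym l z) in H. lra. }
  exists l. split; [exact HlZ|split; [exact Hl|]].
  intros [_ Haff]. split; [exact HlZ|]. intros z Hz.
  set (v := hsub l z).
  assert (Hinv : forall n, hinner (x n) v = hinner x0 v).
  { induction n. reflexivity. rewrite hx, <- IHn.
    apply (avg_orth (T (r n)) z l (HTavg (r n))).
    intro t. apply HZ. apply Haff; auto. }
  assert (Hlv : hinner l v = hinner x0 v).
  { assert (Rabs (hinner l v - hinner x0 v) = 0); [|destruct (Req_dec (hinner l v - hinner x0 v) 0); [lra|exfalso; eapply Rabs_no_R0; eauto]].
    apply small_zero. apply Rabs_pos. intros eta Heta.
    assert (Hv := hnorm_pos v).
    destruct (Hl (eta / (hnorm v + 1))) as [N HN]. apply Rdiv_lt_0_compat; lra.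
    specialize (HN N (le_n N)). rewrite <- (Hinv N).
    replace (hinner l v - hinner (x N) v) with (hinner (hsub l (x N)) v) by (rewrite inner_sub_l; ring).
    eapply Rle_lt_trans. apply abs_inner_le. rewrite hnorm_sub_sym.
    assert (hnorm (hsub (x N) l) * hnorm v <= eta / (hnorm v + 1) * hnorm v).
    { apply Rmult_le_compat_r; lra. }
    assert (eta / (hnorm v + 1) * hnorm v < eta).
    { unfold Rdiv. rewrite Rmult_assoc. rewrite <- (Rmult_1_r eta) at 2. apply Rmult_lt_compat_l; auto.
      apply (Rmult_lt_reg_l (hnorm v + 1)). lra. field_simplify; lra. }
    lra. }
  apply hnorm_le_nsq.
  assert (E : hsub x0 z = hadd (hsub x0 l) v) by (apply vec_ext; intro w; unfold v; lexp; ring).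
  rewrite E, nsq_add. rewrite inner_sub_l, Hlv. assert (H := nsq_pos v). lra.
Qed.
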